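(* Let $F$ be an infinite field, $G$ a group with identity $e$, and let $B=UT(d_1,\dots,d_n)$ be endowed with an elementary $G$-grading. If the polynomials $x_{e}^{(1)}x_{e}^{(2)}-x_{e}^{(2)}x_{e}^{(1)}$ and $x_{g}^{(1)}x_{g^{-1}}^{(2)}x_{g}^{(3)}-x_{g}^{(3)}x_{g^{-1}}^{(2)}x_{g}^{(1)}$ ($g\neq e$, $B_g\neq0$) form a basis of the graded polynomial identities of $B$, then $n=1$, i.e., $UT(d_1,\dots,d_n)=M_{d_1}(F)$.
   Context: $UT(d_1,\dots,d_n)$ is the subalgebra of $M_{d_1+\cdots+d_n}(F)$ of upper block triangular matrices with diagonal blocks of sizes $d_1,\dots,d_n$ (blocks $A_{ij}$ of size $d_i\times d_j$, zero for $i>j$). An elementary grading is one induced by a tuple $(a_1,\dots,a_m)\in G^m$, $m=d_1+\cdots+d_n$: the matrix unit $e_{ij}$ has degree $a_i^{-1}a_j$. A basis of the graded identities is a set generating the $T_G$-ideal of all graded polynomial identities (in free variables $x_g^{(i)}$ of degree $g$). *)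

(* Defs.v *)
From HB Require Import structures.
From mathcomp Require Import all_boot all_order all_algebra.
From mathcomp Require Import monoid.
Set Implicit Arguments. Unset Strict Implicit. Unset Printing Implicit Defensive.
Import Order.TTheory GRing.Theory Num.Theory.

Local Open Scope ring_scope.

Definition infinite_type (T : eqType) : Prop := forall s : seq T, exists x, x \notin s.

(* A variable x_g^(i) is the pair (i, g) : nat * G.  A monomial (word) is a
   sequence of variables; a polynomial is represented by a finite formal linear
   combination (list of (coefficient, word) pairs); two representations denote
   the same element of F<X_G> iff all their coefficients agree (peq). *)
Section FreeAlg.
Variables (F : fieldType) (G : groupType).

Definition gvar := (nat * G)%type.
Definition gword := seq gvar.
Definition gpoly := seq (F * gword).

Definition pvar (i : nat) (g : G) : gpoly := [:: (1, [:: (i, g)])].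
Definition padd (p q : gpoly) : gpoly := p ++ q.
Definition pscale (c : F) (p : gpoly) : gpoly := [seq (c * t.1, t.2) | t <- p].
Definition popp (p : gpoly) : gpoly := pscale (-1) p.
Definition psub (p q : gpoly) : gpoly := padd p (popp q).
Definition pmul (p q : gpoly) : gpoly := [seq (t.1 * s.1, t.2 ++ s.2) | t <- p, s <- q].

Definition pcoef (p : gpoly) (w : gword) : F := \sum_(t <- p | t.2 == w) t.1.
Definition peq (p q : gpoly) : Prop := forall w, pcoef p w = pcoef q w.

Definition wdeg (w : gword) : G := foldr (fun v g => (v.2 * g)%g) 1%g w.
Definition homogeneous (g : G) (p : gpoly) : Prop :=
  forall w, pcoef p w != 0 -> wdeg w = g.

Definition wsubst (phi : gvar -> gpoly) (w : gword) : gpoly :=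
  foldr (fun v acc => pmul (phi v) acc) [:: (1, [::])] w.
Definition psubst (phi : gvar -> gpoly) (p : gpoly) : gpoly :=
  flatten [seq pscale t.1 (wsubst phi t.2) | t <- p].
Definition graded_subst (phi : gvar -> gpoly) : Prop :=
  forall v : gvar, homogeneous v.2 (phi v).

Definition TG_ideal (I : gpoly -> Prop) : Prop :=
  [/\ (forall p q, peq p q -> I p -> I q),
      I [::],
      (forall p q, I p -> I q -> I (padd p q)),
      (forall c p, I p -> I (pscale c p)) &
      ((forall p q, I p -> I (pmul q p) /\ I (pmul p q)) /\
       (forall phi p, graded_subst phi -> I p -> I (psubst phi p)))].

Definition in_TG_ideal (S : gpoly -> Prop) (f : gpoly) : Prop :=
  forall I, TG_ideal I -> (forall s, S s -> I s) -> I f.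

Definition peval (m : nat) (rho : gvar -> 'M[F]_m) (p : gpoly) : 'M[F]_m :=
  \sum_(t <- p) t.1 *: \prod_(v <- t.2) rho v.

End FreeAlg.

Section UT.
Variables (n : nat) (d : 'I_n -> nat).

Definition utsize : nat := \sum_(k < n) d k.

(* index (0-based) of the diagonal block containing row/column r:
   the number of k with d_0 + ... + d_k <= r *)
Definition blk (r : nat) : nat :=
  \sum_(k < n) ((\sum_(j < n | (j <= k)%N) d j <= r)%N : nat).

Definition in_UT (F : fieldType) (A : 'M[F]_utsize) : Prop :=
  forall r c : 'I_utsize, (blk c < blk r)%N -> A r c = 0.

Variables (F : fieldType) (G : groupType) (a : 'I_utsize -> G).

(* degree of the matrix unit e_{rc} in the elementary grading given by a *)
Definition edeg (r c : 'I_utsize) : G := ((a r)^-1 * a c)%g.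

Definition in_Bg (g : G) (A : 'M[F]_utsize) : Prop :=
  in_UT A /\ forall r c, edeg r c != g -> A r c = 0.

Definition Bg_nonzero (g : G) : Prop :=
  exists r c : 'I_utsize, (blk r <= blk c)%N /\ edeg r c = g.

Definition graded_identity (f : gpoly F G) : Prop :=
  forall rho : gvar G -> 'M[F]_utsize,
    (forall v : gvar G, in_Bg v.2 (rho v)) -> peval rho f = 0.

Definition basis_set (f : gpoly F G) : Prop :=
  f = psub (pmul (pvar F 1 1%g) (pvar F 2 1%g)) (pmul (pvar F 2 1%g) (pvar F 1 1%g))
  \/ exists g : G, [/\ g != 1%g, Bg_nonzero g &
       f = psub (pmul (pmul (pvar F 1 g) (pvar F 2 g^-1%g)) (pvar F 3 g))
                (pmul (pmul (pvar F 3 g) (pvar F 2 g^-1%g)) (pvar F 1 g))].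

End UT.

(* Main.v *)
Require Import Defs.
From HB Require Import structures.
From mathcomp Require Import all_boot all_order all_algebra.
From mathcomp Require Import monoid.
From mathcomp Require Import ring.
Set Implicit Arguments. Unset Strict Implicit. Unset Printing Implicit Defensive.
Import Order.TTheory GRing.Theory Num.Theory.
Local Open Scope ring_scope.


Section Ceval.
Variables (F : fieldType) (G : groupType).
Implicit Types (p q : gpoly F G).

Definition mon (lam : gvar G -> F) (w : gword G) : F := \prod_(v <- w) lam v.
Definition ceval (lam : gvar G -> F) p : F := \sum_(t <- p) t.1 * mon lam t.2.

Lemma ceval_W lam p (W : seq (gword G)) : uniq W -> {subset map snd p <= W} ->
  ceval lam p = \sum_(w <- W) pcoef p w * mon lam w.
Proof.
move=> uW sW.
rewrite /ceval /pcoef.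
under [RHS]eq_bigr => w _ do rewrite mulr_suml big_mkcond.
rewrite exchange_big /=; apply: eq_big_seq => t tp.
rewrite -big_mkcond /=.
rewrite (eq_bigr (fun _ => t.1 * mon lam t.2)); last by move=> w /eqP ->.
rewrite big_const_seq.
have -> : count (fun w => t.2 == w) W = 1%N.
  rewrite (eq_count (a2 := pred1 t.2)); last by move=> w /=; rewrite eq_sym.
  by rewrite count_uniq_mem // sW // map_f.
by rewrite iter_addr addr0 -[RHS]mulr1n.
Qed.

Lemma ceval_peq lam p q : peq p q -> ceval lam p = ceval lam q.
Proof.
move=> e.
set W := undup (map snd p ++ map snd q).
have uW : uniq W by exact: undup_uniq.
rewrite (@ceval_W lam p W) //; last by move=> w wp; rewrite mem_undup mem_cat wp.
rewrite (@ceval_W lam q W) //; last by move=> w wq; rewrite mem_undup mem_cat wq orbT.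
by apply: eq_bigr => w _; rewrite e.
Qed.

Lemma ceval_add lam p q : ceval lam (padd p q) = ceval lam p + ceval lam q.
Proof. by rewrite /ceval /padd big_cat. Qed.

Lemma ceval_scale lam c p : ceval lam (pscale c p) = c * ceval lam p.
Proof.
rewrite /ceval /pscale big_map mulr_sumr; apply: eq_bigr => t _ /=.
by rewrite mulrA.
Qed.

Lemma mon_cat lam w1 w2 : mon lam (w1 ++ w2) = mon lam w1 * mon lam w2.
Proof. by rewrite /mon big_cat. Qed.

Lemma ceval_mul lam p q : ceval lam (pmul p q) = ceval lam p * ceval lam q.
Proof.
rewrite /ceval /pmul big_allpairs_dep /= mulr_suml; apply: eq_bigr => t _.
rewrite mulr_sumr; apply: eq_bigr => s _ /=.
rewrite mon_cat; ring.
Qed.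

Lemma ceval_wsubst lam phi w :
  ceval lam (wsubst phi w) = mon (fun v => ceval lam (phi v)) w.
Proof.
elim: w => [|v w IH] /=.
  by rewrite /ceval /mon !big_cons !big_nil /= mulr1 addr0.
by rewrite ceval_mul IH /mon big_cons.
Qed.

Lemma ceval_subst lam phi p :
  ceval lam (psubst phi p) = ceval (fun v => ceval lam (phi v)) p.
Proof.
rewrite /psubst /ceval big_flatten /= big_map; apply: eq_bigr => t _.
by rewrite -/(ceval lam _) ceval_scale ceval_wsubst.
Qed.

Definition Icomm (p : gpoly F G) : Prop := forall lam, ceval lam p = 0.

Lemma Icomm_TG : TG_ideal Icomm.
Proof.
split.
- by move=> p q e Ip lam; rewrite -(ceval_peq lam e).
- by move=> lam; rewrite /ceval big_nil.
- by move=> p q Ip Iq lam; rewrite ceval_add Ip Iq addr0.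
- by move=> c p Ip lam; rewrite ceval_scale Ip mulr0.
split.
- by move=> p q Ip; split=> lam; rewrite ceval_mul Ip ?mulr0 ?mul0r.
- by move=> phi p _ Ip lam; rewrite ceval_subst Ip.
Qed.
End Ceval.



Lemma ceval_var (F : fieldType) (G : groupType) lam i (g : G) :
  ceval lam (pvar F i g) = lam (i, g).
Proof. by rewrite /ceval /mon big_cons big_nil /= big_cons big_nil mulr1 mul1r addr0. Qed.

Lemma basis_Icomm (F : fieldType) (G : groupType) n (d : 'I_n -> nat)
  (a : 'I_(utsize d) -> G) (f : gpoly F G) : basis_set a f -> Icomm f.
Proof.
move=> [->|[g [_ _ ->]]] lam;
  rewrite /psub /popp ceval_add ceval_scale !ceval_mul !ceval_var; ring.
Qed.

Lemma word_notI (F : fieldType) (G : groupType) (w : gword G) :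
  ~ Icomm [:: ((1 : F), w)].
Proof.
move=> /(_ (fun _ => 1)); rewrite /ceval big_cons big_nil /mon /= addr0 mul1r.
by rewrite big1 // => /eqP; rewrite oner_eq0.
Qed.



Section Path.
Variables (n : nat) (d : 'I_n -> nat) (F : fieldType) (G : groupType)
  (a : 'I_(utsize d) -> G).
Local Notation m := (utsize d).

Lemma path_prod (rho : gvar G -> 'M[F]_m) :
  (forall v : gvar G, in_Bg a v.2 (rho v)) ->
  forall (vs : seq (gvar G)) (r c : 'I_m),
  (\prod_(v <- vs) rho v) r c != 0 ->
  [/\ a c = (a r * wdeg vs)%g, (blk d r <= blk d c)%N &
   forall k, exists t : 'I_m, [/\ (blk d r <= blk d t)%N, (blk d t <= blk d c)%N &
                a t = (a r * wdeg (take k vs))%g]].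
Proof.
move=> Hrho; elim=> [|v vs IH] r c.
  rewrite big_nil mxE /= => Hne.
  have e : r = c by apply/eqP; apply: contraNT Hne => /negbTE ->.
  subst c; split=> //; first by rewrite mulg1.
  by move=> k; exists r; rewrite mulg1.
rewrite big_cons -mulmxE mxE => Hne.
have [t Ht|H0] := pickP (fun t => rho v r t * (\prod_(v0 <- vs) rho v0) t c != 0).
  move: Ht; rewrite mulf_eq0 negb_or => /andP [H1 H2].
  have [IH1 IH2 IH3] := IH t c H2.
  have [HU HB] := Hrho v.
  have Hrt : (blk d r <= blk d t)%N by rewrite leqNgt; apply: contra H1 => /HU ->.
  have Hdeg : edeg a r t = v.2.
    by apply/eqP; apply: contraNT H1 => /HB ->.
  have Eat : a t = (a r * v.2)%g by rewrite -Hdeg /edeg mulVKg.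
  split.
  - by rewrite IH1 Eat /= mulgA.
  - exact: leq_trans Hrt IH2.
  case=> [|k].
    by exists r; rewrite /= mulg1 leqnn (leq_trans Hrt IH2).
  have [t' [h1 h2 h3]] := IH3 k.
  exists t'; split=> //; first exact: leq_trans Hrt h1.
  by rewrite h3 Eat /= mulgA.
move: Hne; rewrite big1 ?eqxx // => t _.
by apply/eqP; move: (H0 t) => /negbFE.
Qed.
End Path.



Section Word.
Variables (G : groupType) (T : eqType) (a : T -> G).

Fixpoint W (x : T) (ys : seq T) : gword G :=
  if ys is y :: ys' then (0%N, ((a x)^-1 * a y)%g) :: W y ys' else [::].

Lemma wdeg_W x ys : wdeg (W x ys) = ((a x)^-1 * a (last x ys))%g.
Proof.
elim: ys x => [|y ys IH] x /=; first by rewrite mulVg.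
by rewrite IH mulgA mulgK.
Qed.

Lemma take_W x ys y : y \in x :: ys -> exists k, wdeg (take k (W x ys)) = ((a x)^-1 * a y)%g
  :> G.
Proof.
elim: ys x => [|z ys IH] x.
  by rewrite inE => /eqP ->; exists 0%N; rewrite mulVg.
rewrite inE => /orP [/eqP ->|yin]; first by exists 0%N; rewrite mulVg.
have [k Hk] := IH z yin.
by exists k.+1; rewrite /= Hk mulgA mulgK.
Qed.
End Word.

Section Main.
Variables (n : nat) (d : 'I_n -> nat) (F : fieldType) (G : groupType)
  (a : 'I_(utsize d) -> G).
Local Notation m := (utsize d).

Definition comm_poly : gpoly F G :=
  psub (pmul (pvar F 1 1%g) (pvar F 2 1%g)) (pmul (pvar F 2 1%g) (pvar F 1 1%g)).

Lemma delta_Bg (r c : 'I_m) : (blk d r <= blk d c)%N ->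
  in_Bg a (edeg a r c) (delta_mx r c : 'M[F]_m).
Proof.
move=> Hrc; split.
  move=> i j Hji; rewrite mxE; case: (eqVneq i r) => [ei|] //; case: (eqVneq j c) => [ej|] //.
  by subst; rewrite ltnNge Hrc in Hji.
move=> i j Hne; rewrite mxE; case: (eqVneq i r) => [ei|] //; case: (eqVneq j c) => [ej|] //.
by subst; rewrite eqxx in Hne.
Qed.

Lemma zero_Bg g : in_Bg a g (0 : 'M[F]_m).
Proof. by split=> [i j _|i j _]; rewrite mxE. Qed.

Lemma a_inj_aux : graded_identity a comm_poly ->
  forall r c : 'I_m, (blk d r <= blk d c)%N -> a r = a c -> r = c.
Proof.
move=> Hid r c Hrc Hac; apply/eqP; apply/negPn/negP => Hne.
pose rho (v : gvar G) : 'M[F]_m :=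
  if v == (1%N, 1%g) then delta_mx r c else if v == (2%N, 1%g) then delta_mx c c else 0.
have Hrho : forall v : gvar G, in_Bg a v.2 (rho v).
  move=> v; rewrite /rho; case: (eqVneq v (1%N, 1%g)) => [->|_].
    by have := delta_Bg Hrc; rewrite /edeg Hac mulVg.
  case: (eqVneq v (2%N, 1%g)) => [->|_]; last exact: zero_Bg.
  by have := delta_Bg (leqnn (blk d c)); rewrite /edeg mulVg.
have := Hid rho Hrho.
rewrite /peval /comm_poly /psub /padd /popp /pscale /pmul /pvar /=.
rewrite !big_cons big_nil /=.
idtac.
rewrite big_nil /rho !eqxx /=.
rewrite !mulr1 ?mul1r !scale1r addr0 scaleN1r -!mulmxE mul_delta_mx mul_delta_mx_0 //.
rewrite oppr0 addr0 => /matrixP /(_ r c); rewrite !mxE !eqxx /=.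
  by move/eqP; rewrite oner_eq0.
by rewrite eq_sym.
Qed.

Lemma a_inj : graded_identity a comm_poly -> injective a.
Proof.
move=> Hid r c Hac; case: (leqP (blk d r) (blk d c)) => H.
  exact: a_inj_aux.
by apply/esym; apply: a_inj_aux => //; apply: ltnW.
Qed.

Lemma prefix_ge (k : 'I_n) : (d k <= \sum_(j < n | (j <= k)%N) d j)%N.
Proof. by rewrite (bigD1 k) //= leq_addr. Qed.

Lemma blk0 : (forall k, (0 < d k)%N) -> blk d 0 = 0%N.
Proof.
move=> dpos; rewrite /blk big1 // => k _.
by have := leq_trans (dpos k) (prefix_ge k); rewrite ltnNge => /negbTE ->.
Qed.

End Main.



Lemma blk1 n (d : 'I_n.+2 -> nat) : (1 <= blk d (d ord0))%N.
Proof.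
rewrite /blk (bigD1 ord0) //=.
have -> : (\sum_(j < n.+2 | (j <= @ord0 n.+1)%N) d j) = d ord0.
  rewrite (big_pred1 ord0) // => j /=; by case: j => [[|j] ?].
by rewrite leqnn /= leq_addr.
Qed.

Lemma size_gt n (d : 'I_n.+2 -> nat) : (forall k, (0 < d k)%N) -> (d ord0 < utsize d)%N.
Proof.
move=> dpos; rewrite /utsize big_ord_recl big_ord_recl /=.
rewrite -{1}[d ord0]addn0 ltn_add2l; exact: (leq_trans (dpos _) (leq_addr _ _)).
Qed.

Unset Implicit Arguments.
Local Close Scope ring_scope.

Theorem mainTheorem6 (F : fieldType) (G : groupType) (n : nat) (d : 'I_n -> nat)
  (a : 'I_(utsize d) -> G) :
  infinite_type F ->
  (forall k, (0 < d k)%N) ->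
  (forall f : gpoly F G, graded_identity a f <-> in_TG_ideal (basis_set a) f) ->
  n = 1%N.
Proof.
move=> _ dpos Hyp.
have Hsub : forall f : gpoly F G, graded_identity a f -> Icomm f.
  move=> f /Hyp H; apply: H; first exact: Icomm_TG.
  exact: basis_Icomm.
have Hbas : forall f : gpoly F G, basis_set a f -> graded_identity a f.
  by move=> f Hf; apply/Hyp => I _ HI; apply: HI.
case: n d a dpos Hyp Hsub Hbas => [|[//|n']] d a dpos Hyp Hsub Hbas.
  exfalso; apply: (@word_notI F G [::]); apply: Hsub => rho _.
  apply/matrixP => [[i Hi]]; exfalso; move: Hi; by rewrite /utsize big_ord0.
exfalso.
have ainj : injective a.
  apply: (@a_inj _ d F G a); apply: Hbas; by left.
have m0 : (0 < utsize d)%N by apply: leq_ltn_trans (size_gt dpos).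
pose i0 : 'I_(utsize d) := Ordinal m0.
pose i1 : 'I_(utsize d) := Ordinal (size_gt dpos).
pose w := W a i0 (enum 'I_(utsize d) ++ [:: i0]).
apply: (@word_notI F G w); apply: Hsub => rho Hrho.
rewrite /peval big_cons big_nil addr0 scale1r.
apply/matrixP => r c; rewrite mxE /=; apply/eqP; apply: contraT => Hne.
have [H1 H2 H3] := path_prod Hrho Hne.
have wd : wdeg w = 1%g by rewrite /w wdeg_W last_cat /= mulVg.
move: H1; rewrite wd mulg1 => /ainj ecr; subst c.
have Hf : forall u : 'I_(utsize d), exists t : 'I_(utsize d),
    [/\ (blk d r <= blk d t)%N, (blk d t <= blk d r)%N &
        a t = (a r * ((a i0)^-1 * a u))%g].
  move=> u; have Hu : u \in i0 :: (enum 'I_(utsize d) ++ [:: i0]).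
    by rewrite inE mem_cat mem_enum orbT.
  have [k Hk] := take_W a Hu.
  have [t [t1 t2 t3]] := H3 k; exists t; split=> //; by rewrite t3 -Hk.
have [f Hff] := fin_all_exists Hf.
have finj : injective f.
  move=> u u' e; apply: ainj.
  have [_ _ e1] := Hff u; have [_ _ e2] := Hff u'.
  by move: e1; rewrite e e2 => /mulgI /mulgI.
have [g _ fg] := injF_bij finj.
have [h1 _ _] := Hff (g i0); have [_ h2 _] := Hff (g i1).
move: h1 h2; rewrite !fg /= (blk0 dpos) leqn0 => /eqP ->.
by rewrite leqn0 => /eqP h; have := blk1 d; rewrite h.
Qed.
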